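(* Let $(q_i)_i$ be probabilities with $\sum_iq_i=1$ and $\mu_i>0$, and let $$f(\alpha)=\inf_{\{\alpha_i\}:\ \alpha_i\in[0,1],\ \sum_iq_i\alpha_i=\alpha}\ \sum_iq_iG_{\mu_i}(\alpha_i).$$ For $\alpha\in(0,1)$, let $\Lambda(\alpha)\in\mathbb{R}$ be defined implicitly by $$1-\alpha=\sum_iq_i\,\Phi\!\left(\frac{\Lambda(\alpha)}{\mu_i}+\frac{\mu_i}{2}\right).$$ Then $$f(\alpha)=\sum_iq_i\,\Phi\!\left(\frac{\Lambda(\alpha)}{\mu_i}-\frac{\mu_i}{2}\right).$$
   Context: $\Phi$ is the standard normal CDF and $G_\mu(\alpha)=\Phi(\Phi^{-1}(1-\alpha)-\mu)$ for $\alpha\in[0,1]$ (the Gaussian trade-off function). *)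

(* Defs.v *)
From HB Require Import structures.
From mathcomp Require Import all_boot all_order all_algebra.
From mathcomp Require Import all_classical all_reals all_analysis.
Set Implicit Arguments. Unset Strict Implicit. Unset Printing Implicit Defensive.
Import Order.TTheory GRing.Theory Num.Theory.
Local Open Scope classical_set_scope.
Local Open Scope ring_scope.

Definition Phi {R : realType} (x : R) : R :=
  fine (normal_prob 0 1 `]-oo, x]).

(* Quantile function of the standard normal, for p in (0,1):
   Phi is a continuous increasing bijection R -> (0,1), so this sup is the
   unique x with Phi x = p. *)
Definition PhiInv {R : realType} (p : R) : R := sup [set x : R | Phi x <= p].

(* Gaussian trade-off function G_mu(alpha) = Phi(Phi^{-1}(1-alpha) - mu),
   on [0,1], with the limiting conventions Phi^{-1}(1) = +oo, Phi^{-1}(0) = -oo,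
   i.e. G_mu(0) = 1 and G_mu(1) = 0. *)
Definition G {R : realType} (mu alpha : R) : R :=
  if alpha <= 0 then 1
  else if 1 <= alpha then 0
  else Phi (PhiInv (1 - alpha) - mu).

Definition f_mix {R : realType} (n : nat) (q mu : 'I_n -> R) (alpha : R) : R :=
  inf [set s : R | exists a : 'I_n -> R,
        (forall i, 0 <= a i <= 1) /\
        \sum_(i < n) q i * a i = alpha /\
        s = \sum_(i < n) q i * G (mu i) (a i)].

(* Main.v *)
Require Import Defs.
From HB Require Import structures.
From mathcomp Require Import all_boot all_order all_algebra.
From mathcomp Require Import all_classical all_reals all_analysis.
From mathcomp Require Import ring lra.
Import Order.TTheory GRing.Theory Num.Theory.
Import numFieldTopology.Exports.
Local Open Scope classical_set_scope.
Local Open Scope ring_scope.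

Section S.
Context {R : realType}.
Notation pdf := (@normal_pdf R 0 1).

Lemma pdfE (x : R) : pdf x = normal_peak 1 * expR (- x ^+ 2 / 2).
Proof. by rewrite /normal_pdf oner_eq0 /= /normal_fun subr0 expr1n. Qed.

Lemma pdf_gt0 (x : R) : 0 < pdf x.
Proof. by rewrite pdfE mulr_gt0 ?expR_gt0 // normal_peak_gt0 // oner_neq0. Qed.

Lemma pdf_le1 (x : R) : pdf x <= 1.
Proof.
apply: (le_trans (normal_pdf_ub 0 x (oner_neq0 R))).
have h1 : 1 <= 1 ^+ 2 * pi *+ 2 :> R.
  by rewrite expr1n mul1r mulr2n; have := pi_ge2 R; lra.
have h2 : 1 <= Num.sqrt (1 ^+ 2 * pi *+ 2 :> R).
  by rewrite -[X in X <= _]sqrtr1 ler_wsqrtr.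
by rewrite /normal_peak invf_le1 // (lt_le_trans ltr01 h2).
Qed.

Lemma Phi_der (x : R) : derivable (@Phi R) x 1 /\ ((@Phi R)^`())%classic x = pdf x.
Proof.
have := @continuous_FTC1 R pdf (BInfty _ true) x (x + 1) (ltr_pwDr ltr01 (lexx x)).
move=> /(_ _ _ _)[].
- apply: integrableS (integrable_normal_pdf 0 1) => //.
- exact: ltNyr.
- apply: continuous_normal_pdf. exact: oner_neq0.
- by [].
Qed.

Lemma is_derive_Phi (x : R) : is_derive x 1 (@Phi R) (pdf x).
Proof. by case: (Phi_der x) => d <-; rewrite derive1E; exact: derivableP. Qed.

Lemma is_derive_Phis (m t : R) : is_derive t 1 (fun z => @Phi R (z - m)) (pdf (t - m)).
Proof.
have dsh : is_derive t 1 (fun z : R => z - m) 1.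
  have h := is_deriveB (is_derive_id t (1:R)) (is_derive_cst m t (1:R)).
  rewrite subr0 in h.
  have -> : (fun z : R => z - m) = (id - cst m) by apply/funext.
  exact: h.
have dsh' : derivable (fun z : R => z - m) t 1 by exact: ex_derive.
have dP := Phi_der (t - m).
apply: DeriveDef.
  apply/derivable1_diffP; apply: (@differentiable_comp _ _ _ _ (fun z : R => z - m) (@Phi R)).
    by apply/derivable1_diffP; exact: dsh'.
  by apply/derivable1_diffP; exact: dP.1.
rewrite -derive1E.
have := @derive1_comp R (fun z : R => z - m) (@Phi R) t dsh' dP.1.
rewrite /= => ->; rewrite dP.2 derive1E derive_val mulr1 //.
Qed.

Lemma ndecr_of_deriv (f df : R -> R) (x y : R) : x <= y ->
  (forall t : R, is_derive t 1 f (df t)) -> (forall t, x < t < y -> 0 <= df t) -> f x <= f y.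
Proof.
move=> xy d d0.
have dv : forall t, derivable f t 1 by move=> t; case: (d t) => h _; exact: h.
have dd : forall t, f^`()%classic t = df t by move=> t; rewrite derive1E; case: (d t) => _ h; exact: h.
apply: (@ger0_derive1_ndecr R f x y); rewrite ?lexx //.
all: first [ by move=> t _; exact: dv | by move=> t; rewrite in_itv /= dd; exact: d0 | by apply: derivable_within_continuous => t _; exact: dv ].
Qed.

Lemma incr_of_deriv (f df : R -> R) (x y : R) : x < y ->
  (forall t : R, is_derive t 1 f (df t)) -> (forall t, 0 < df t) -> f x < f y.
Proof.
move=> xy d d0.
have dv : forall t, derivable f t 1 by move=> t; case: (d t) => h _; exact: h.
have dd : forall t, f^`()%classic t = df t by move=> t; rewrite derive1E; case: (d t) => _ h; exact: h.
apply: (@gtr0_derive1_lt_cc R f x y) => //.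
all: first [ by move=> t _; exact: dv | by move=> t _; rewrite dd; exact: d0 | by apply: derivable_within_continuous => t _; exact: dv | by rewrite in_itv /= lexx ltW ].
Qed.

Notation P := (@normal_prob R 0 1).

Lemma PhiE (x : R) : P `]-oo, x] = (@Phi R x)%:E.
Proof.
rewrite /Phi fineK // ge0_fin_numE ?measure_ge0 //.
exact: (le_lt_trans (probability_le1 P _) (ltry 1)).
Qed.

Lemma Phi_ge0 (x : R) : 0 <= Phi x.
Proof. by rewrite -lee_fin -PhiE measure_ge0. Qed.

Lemma Phi_le1 (x : R) : Phi x <= 1.
Proof. by rewrite -lee_fin -PhiE probability_le1. Qed.

Lemma Phi_lt (x y : R) : x < y -> Phi x < Phi y.
Proof. move=> xy; have := @incr_of_deriv (@Phi R) pdf x y xy. move=> h; apply: h. exact: is_derive_Phi. exact: pdf_gt0. Qed.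

Arguments Phi_lt {x y}.

Lemma Phi_le (x y : R) : x <= y -> Phi x <= Phi y.
Proof. by rewrite le_eqVlt => /predU1P[->//|/Phi_lt/ltW]. Qed.

Arguments Phi_le {x y}.

Lemma Phi_gt0 (x : R) : 0 < Phi x.
Proof. apply: (le_lt_trans (Phi_ge0 (x - 1))); apply: Phi_lt; rewrite ltrBlDr ltrDl ltr01 //. Qed.

Lemma Phi_lt1 (x : R) : Phi x < 1.
Proof. apply: (lt_le_trans _ (Phi_le1 (x + 1))); apply: Phi_lt; rewrite ltrDl ltr01 //. Qed.

Lemma Phi_lip (x y : R) : x <= y -> Phi y - Phi x <= y - x.
Proof.
move=> xy.
have d : forall t : R, is_derive t 1 (fun z => z - @Phi R z) (1 - pdf t).
  move=> t; have h := is_deriveB (is_derive_id t (1:R)) (is_derive_Phi t).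
  have -> : (fun z : R => z - Phi z) = (id - @Phi R) by apply/funext.
  exact: h.
have := @ndecr_of_deriv (fun z => z - @Phi R z) (fun t => 1 - pdf t) x y xy d.
have p : forall t, x < t < y -> 0 <= 1 - pdf t by move=> t _; rewrite subr_ge0 pdf_le1.
move=> /(_ p) /=.
rewrite -subr_ge0 => h; rewrite -subr_ge0.
have -> : y - x - (Phi y - Phi x) = y - Phi y - (x - Phi x) by ring.
exact: h.
Qed.

Lemma PhiInvK (z : R) : PhiInv (Phi z) = z.
Proof.
rewrite /PhiInv.
have -> : [set x | @Phi R x <= Phi z] = [set x | x <= z].
  apply/seteqP; split => x /=.
  - move=> h; rewrite leNgt; apply/negP => zx; have := Phi_lt zx.
    by rewrite ltNge h.
  - exact: Phi_le.
apply/le_anti/andP; split.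
- by apply: ge_sup; [exists z => /= | move=> x /=].
- by apply: ub_le_sup; [exists z; move=> x /=| rewrite /=].
Qed.

Lemma PhiN1 : (fun n : nat => @Phi R n%:R) @ \oo --> (1:R).
Proof.
have U : \bigcup_n ([set` `]-oo, n%:R]] : set R) = setT.
  apply/seteqP; split => // x _; exists (Num.trunc x).+1 => //=.
  by rewrite in_itv /= ltW // truncnS_gt.
have e : P [set: R] = 1%E by exact: probability_setT.
have h' : (fun n : nat => P [set` `]-oo, n%:R]]) @ \oo --> 1%E.
  rewrite -e -U.
  apply: (@nondecreasing_cvg_mu _ _ R P (fun n : nat => [set` `]-oo, n%:R]] : set R)).
  - by move=> n; exact: measurable_itv.
  - by rewrite U; exact: measurableT.
  - move=> n m nm; apply/subsetPset => x /=; rewrite !in_itv /= => xn.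
    by rewrite (le_trans xn) // ler_nat.
exact: (fine_cvg h').
Qed.

Lemma PhiN0 : (fun n : nat => @Phi R (- n%:R)) @ \oo --> (0:R).
Proof.
have U : \bigcap_n ([set` `]-oo, - n%:R]] : set R) = set0.
  apply/seteqP; split => // x /= /(_ (Num.trunc (- x)).+1 I).
  move=> /= h1; move: h1; rewrite in_itv /= lerNr => h1.
  by have := lt_le_trans (truncnS_gt (- x)) h1; rewrite ltxx.
have e : P set0 = 0%E by exact: measure0.
have h' : (fun n : nat => P [set` `]-oo, - n%:R]]) @ \oo --> 0%E.
  rewrite -e -U.
  apply: (@nonincreasing_cvg_mu _ _ R P (fun n : nat => [set` `]-oo, - n%:R]] : set R)).
  - exact: (le_lt_trans (probability_le1 P _) (ltry 1)).
  - by move=> n; exact: measurable_itv.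
  - by rewrite U.
  - move=> n m nm; apply/subsetPset => x /=; rewrite !in_itv /= => xn.
    by rewrite (le_trans xn) // lerN2 ler_nat.
exact: (fine_cvg h').
Qed.


Lemma lim_le_all (u : nat -> R) (l K : R) : u @ \oo --> l -> (forall n, u n <= K) -> l <= K.
Proof. by move=> h hu; apply: (cvgr_to_le h); apply: nearW. Qed.

Lemma lim_ge_all (u : nat -> R) (l K : R) : u @ \oo --> l -> (forall n, K <= u n) -> K <= l.
Proof. by move=> h hu; apply: (cvgr_to_ge h); apply: nearW. Qed.

Lemma Phi_PhiInv_ge (b : R) : b < 1 -> b <= Phi (PhiInv b).
Proof.
move=> b1.
have [N hN] : exists N : nat, b < Phi N%:R.
  have := PhiN1; move=> /cvgr_gt /(_ b b1).
  by case=> N _ hN; exists N; apply: hN => /=.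
set S := [set x : R | Phi x <= b].
have ubS : ubound S N%:R.
  move=> x /= Sx; rewrite leNgt; apply/negP => /Phi_lt h.
  by have := lt_le_trans (lt_trans hN h) Sx; rewrite ltxx.
have gt : forall x, PhiInv b < x -> b < Phi x.
  move=> x wx; rewrite ltNge; apply/negP => Sx.
  have [[s Ss]|S0] := pselect (S !=set0).
    have := ub_le_sup (ex_intro _ N%:R ubS) Sx.
    by rewrite /PhiInv -/S leNgt wx.
  by apply: S0; exists x.
rewrite leNgt; apply/negP => hw.
set w := PhiInv b.
set d := (b - Phi w) / 2.
have d0 : 0 < d by rewrite /d divr_gt0 // subr_gt0.
have := @Phi_lip w (w + d) (ltW (ltr_pwDr d0 (lexx w))).
have := gt (w + d) (ltr_pwDr d0 (lexx w)).
rewrite /d; lra.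
Qed.

Section K.
Variables (m Lam : R).
Hypothesis m0 : 0 < m.
Let c := expR Lam.
Let zs := Lam / m + m / 2.
Let H z := Phi (z - m) - c * Phi z.

Let key t : pdf (t - m) - c * pdf t =
  normal_peak 1 * expR (- t ^+ 2 / 2) * (expR (m * (t - zs) + Lam) - expR Lam).
Proof.
rewrite !pdfE.
have -> : - (t - m) ^+ 2 / 2 = - t ^+ 2 / 2 + (m * (t - zs) + Lam).
  rewrite /zs; field; exact: lt0r_neq0.
rewrite expRD /c; ring.
Qed.

Let dH (t : R) : is_derive t 1 H (pdf (t - m) - c * pdf t).
Proof.
have h := is_deriveB (is_derive_Phis m t) (is_deriveZ c (is_derive_Phi t)).
have -> : H = ((fun z => Phi (z - m)) - c \*: @Phi R) by apply/funext.
exact: h.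
Qed.

Let Hmin z : H zs <= H z.
Proof.
have [zz|zz] := leP zs z.
  apply: (@ndecr_of_deriv H (fun t => pdf (t - m) - c * pdf t) zs z zz dH).
  move=> t /andP[t1 _]; rewrite key mulr_ge0 // ?mulr_ge0 ?normal_peak_ge0 ?expR_ge0 //.
  have e1 : expR Lam <= expR (m * (t - zs) + Lam).
    rewrite ler_expR lerDr; apply: mulr_ge0; [exact: ltW | rewrite subr_ge0; exact: ltW].
  lra.
have h := @ndecr_of_deriv (fun t => - H t) (fun t => - (pdf (t - m) - c * pdf t)) z zs (ltW zz).
rewrite lerN2 in h; apply: h.
  move=> t; exact: is_deriveN (dH t).
move=> t /andP[_ t1]; rewrite key oppr_ge0 pmulr_rle0 ?mulr_gt0 ?expR_gt0 ?normal_peak_gt0 ?oner_neq0 //.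
rewrite subr_le0 ler_expR gerDr pmulr_rle0 // subr_le0 ltW //.
Qed.

Lemma Kineq (a : R) : 0 <= a <= 1 ->
  Phi (Lam / m - m / 2) + c * (1 - Phi zs) <= G m a + c * a.
Proof.
move=> /andP[a0 a1].
have -> : Lam / m - m / 2 = zs - m by rewrite /zs; lra.
have c0 : 0 < c by exact: expR_gt0.
rewrite /G.
have [a0'|a0'] := leP a 0.
  have -> : a = 0 by apply/le_anti; rewrite a0 a0'.
  have h : 1 <= (1 - H zs) / c.
    apply: (@lim_le_all (fun n : nat => Phi n%:R) 1 ((1 - H zs) / c) PhiN1) => n.
    rewrite ler_pdivlMr //.
    have hm := Hmin (Num.max zs n%:R).
    have p1 := Phi_le1 (Num.max zs n%:R - m).
    have p2 : c * Phi n%:R <= c * Phi (Num.max zs n%:R).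
      by rewrite ler_wpM2l ?(ltW c0) // Phi_le // le_max lexx orbT.
    move: hm; rewrite /H; lra.
  rewrite ler_pdivlMr // mul1r in h.
  move: h; rewrite /H; lra.
have [a1'|a1'] := leP 1 a.
  have -> : a = 1 by apply/le_anti; rewrite a1 a1'.
  have h : H zs <= 0.
    apply: (@lim_ge_all (fun n : nat => Phi (- n%:R)) 0 (H zs) PhiN0) => n.
    have hm := Hmin (Num.min zs (- n%:R)).
    have p1 : 0 <= c * Phi (Num.min zs (- n%:R)) by rewrite mulr_ge0 ?Phi_ge0 ?(ltW c0).
    have p2 : Phi (Num.min zs (- n%:R) - m) <= Phi (- n%:R).
      have hmn : Num.min zs (- n%:R) <= - n%:R by rewrite ge_min lexx orbT.
      apply: Phi_le; rewrite lerBlDr; apply: (le_trans hmn); rewrite lerDl; exact: ltW.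
    move: hm; rewrite /H; lra.
  move: h; rewrite /H; lra.
set w := PhiInv (1 - a).
have hw : 1 - a <= Phi w by apply: Phi_PhiInv_ge; lra.
have hm := Hmin w.
have p : c * (1 - a) <= c * Phi w by rewrite ler_wpM2l ?(ltW c0).
move: hm; rewrite /H; lra.
Qed.
End K.


Lemma Gstar (m z : R) : G m (1 - Phi z) = Phi (z - m).
Proof.
have h1 := Phi_gt0 z; have h2 := Phi_lt1 z.
rewrite /G ifF; last by apply/negbTE; rewrite -ltNge; lra.
rewrite ifF; last by apply/negbTE; rewrite -ltNge; lra.
have -> : 1 - (1 - Phi z) = Phi z by ring.
by rewrite PhiInvK.
Qed.

End S.

Theorem lemma5 (R : realType) (n : nat) (q mu : 'I_n -> R)
  (hq : forall i, 0 <= q i) (hq1 : \sum_(i < n) q i = 1)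
  (hmu : forall i, 0 < mu i)
  (alpha : R) (halpha : 0 < alpha < 1) (Lam : R)
  (hLam : 1 - alpha = \sum_(i < n) q i * Phi (Lam / mu i + mu i / 2)) :
  f_mix q mu alpha = \sum_(i < n) q i * Phi (Lam / mu i - mu i / 2).
Proof.
rewrite /f_mix.
set S := [set s : R | _].
set c := expR Lam.
set v := \sum_(i < n) q i * Phi (Lam / mu i - mu i / 2).
have vS : S v.
  exists (fun i => 1 - Phi (Lam / mu i + mu i / 2)); split; [|split].
  - move=> i; have h1 := Phi_gt0 (Lam / mu i + mu i / 2).
    have h2 := Phi_lt1 (Lam / mu i + mu i / 2).
    apply/andP; split; lra.
  - under eq_bigr do rewrite mulrBr mulr1.
    rewrite sumrB hq1 -hLam; ring.
  - apply: eq_bigr => i _; rewrite Gstar; congr (_ * Phi _); lra.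
have lb : lbound S v.
  move=> s [a [ha [hs ->]]].
  have H : \sum_(i < n) q i * (Phi (Lam / mu i - mu i / 2) + c * (1 - Phi (Lam / mu i + mu i / 2)))
     <= \sum_(i < n) q i * (G (mu i) (a i) + c * a i).
    apply: ler_sum => i _; apply: ler_wpM2l => //; exact: Kineq.
  have e1 : \sum_(i < n) q i * (Phi (Lam / mu i - mu i / 2) + c * (1 - Phi (Lam / mu i + mu i / 2)))
     = v + c * (\sum_(i < n) q i - \sum_(i < n) q i * Phi (Lam / mu i + mu i / 2)).
    rewrite -sumrB mulr_sumr /v -big_split /=; apply: eq_bigr => i _; ring.
  have e2 : \sum_(i < n) q i * (G (mu i) (a i) + c * a i)
     = \sum_(i < n) q i * G (mu i) (a i) + c * \sum_(i < n) q i * a i.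
    rewrite mulr_sumr -big_split /=; apply: eq_bigr => i _; ring.
  move: H; rewrite e1 e2 hq1 -hLam hs.
  have -> : c * (1 - (1 - alpha)) = c * alpha by ring.
  lra.
apply/le_anti/andP; split.
- exact: (ge_inf (ex_intro _ v lb) vS).
- exact: (lb_le_inf (ex_intro _ v vS) lb).
Qed.
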